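(* Let $\lambda<\kappa$ be infinite cardinals with $\mathrm{cf}(\lambda)>\omega$ and $\mathrm{cf}(\kappa)\ne\mathrm{cf}(\lambda)$. Then every $(\lambda,\kappa)$-graph contains a $(\lambda',\kappa)$-subgraph for some cardinal $\lambda'<\lambda$.
   Context: For infinite cardinals $\lambda<\kappa$, a $(\lambda,\kappa)$-graph is a bipartite graph with bipartition $(A,B)$, $|A|=\lambda$, $|B|=\kappa$, in which every vertex $b\in B$ has infinitely many neighbours in $A$. A $(\lambda',\kappa)$-subgraph of such a graph is a subgraph with bipartition $(C,D)$, $C\subseteq A$, $D\subseteq B$, which is itself a $(\lambda',\kappa)$-graph. *)

(* Defs.v *)
From HB Require Import structures.
From mathcomp Require Import all_boot all_order all_algebra.
From mathcomp Require Import boolp classical_sets functions cardinality.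
From Stdlib Require Import Relation_Definitions Wellfounded.

Set Implicit Arguments. Unset Strict Implicit. Unset Printing Implicit Defensive.
Local Open Scope classical_set_scope.
Local Open Scope card_scope.

Definition strict_wellorder (X : Type) (R : X -> X -> Prop) : Prop :=
  well_founded R /\
  (forall x y z, R x y -> R y z -> R x z) /\
  (forall x y, R x y \/ x = y \/ R y x).

(* R is a well-order of X of order type |X| (an initial ordinal):
   every proper initial segment has cardinality strictly less than |X|. *)
Definition initial_wellorder (X : Type) (R : X -> X -> Prop) : Prop :=
  strict_wellorder R /\
  forall x, ~ ([set: X] #<= [set y | R y x]).

Definition cofinal_in (X : Type) (R : X -> X -> Prop) (S : set X) : Prop :=
  forall x, exists s, S s /\ (x = s \/ R x s).

(* S witnesses the cofinality of the cardinal |X|: S is a cofinal subset of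
   minimal cardinality of the initial ordinal |X| (realised by R on X). *)
Definition cof_witness (X : Type) (S : set X) : Prop :=
  exists R : X -> X -> Prop, initial_wellorder R /\ cofinal_in R S /\
    forall S' : set X, cofinal_in R S' -> S #<= S'.

(* bipartite graph with sides A, B and edge relation E; a vertex b of B has
   infinitely many neighbours in C *)
Definition inf_nbrs (A B : Type) (E : A -> B -> Prop) (C : set A) (b : B) :=
  infinite_set [set a | C a /\ E a b].

(* Main.v *)
Require Import Defs.
From HB Require Import structures.
From mathcomp Require Import all_boot all_order all_algebra.
From mathcomp Require Import boolp classical_sets functions cardinality wochoice.
From Stdlib Require Import Relation_Definitions Wellfounded.
Local Open Scope classical_set_scope.
Local Open Scope card_scope.

Lemma card_le_fun T U (u : U) (A : set T) (B : set U) : A #<= B ->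
  exists f : T -> U, (forall x, A x -> B (f x)) /\ {in A &, injective f}.
Proof.
elim/Ppointed: U => U in u B *.
  by case: (no u).
move/pcard_leP => -[f]; exists f; split.
  by move=> x Ax; apply: funS.
exact: inj.
Qed.

Lemma fun_card_le T U (A : set T) (B : set U) (f : T -> U) :
  (forall x, A x -> B (f x)) -> {in A &, injective f} -> A #<= B.
Proof.
move=> fAB fi; apply: (card_le_trans (B := f @` A)).
  by have /card_eqPle[] := card_esym (inj_card_eq fi).
by apply: subset_card_le => _ [x Ax <-]; apply: fAB.
Qed.

Section SW.
Variables (X : Type) (R : X -> X -> Prop) (HR : strict_wellorder R).

Lemma sw_wf : well_founded R. Proof. by case: HR. Qed.
Lemma sw_trans x y z : R x y -> R y z -> R x z.
Proof. by case: HR => _ [t _]; apply: t. Qed.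
Lemma sw_tri x y : R x y \/ x = y \/ R y x.
Proof. by case: HR => _ [_ t]; apply: t. Qed.
Lemma sw_irr x : ~ R x x.
Proof. elim: (sw_wf x) => y _ IH Ryy; exact: (IH y Ryy Ryy). Qed.
Arguments sw_irr {x}. Arguments sw_trans {x y z}.
Lemma sw_least (P : set X) : (exists x, P x) ->
  exists m, P m /\ forall z, P z -> ~ R z m.
Proof.
move=> [x Px]; apply: contrapT => H.
suff: forall y, ~ P y by move/(_ x).
move=> y; elim: (sw_wf y) => {}y _ IH Py; apply: H; exists y; split => // z Pz Rzy.
exact: (IH z Rzy Pz).
Qed.

Definition lst (P : set X) (d : X) : X :=
  match pselect (exists m, P m /\ forall z, P z -> ~ R z m) with
  | left e => proj1_sig (cid e)
  | right _ => d end.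
Lemma lstP P d : (exists x, P x) ->
  P (lst P d) /\ forall z, P z -> ~ R z (lst P d).
Proof.
move=> /sw_least e; rewrite /lst; case: pselect => // e'.
exact: (proj2_sig (cid e')).
Qed.


Section Rec.
Variable S : set X.

Definition hF (s : X) (rec : forall s', R s' s -> X) : X :=
  lst [set z | ~ exists s' (p : R s' s), S s' /\ rec s' p = z] s.
Definition h := Fix sw_wf (fun _ => X) hF.

Lemma hE s : h s = lst [set z | ~ exists s', R s' s /\ S s' /\ h s' = z] s.
Proof.
rewrite /h Fix_eq /hF; last first.
  move=> x f g fg; congr lst; apply/funext => z; apply/propext.
  by split=> H [s' [p [Ss' e]]]; apply: H; exists s', p; split=> //; rewrite ?fg// -fg.
congr lst; apply/funext => z; apply/propext.
split=> H.
  by move=> [s' [p [Ss' e]]]; apply: H; exists s', p.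
by move=> [s' [p [Ss' e]]]; apply: H; exists s'.
Qed.

Lemma hP s : S s -> (h s = s \/ R (h s) s) /\
  (forall s', S s' -> R s' s -> h s' <> h s) /\
  (forall z, R z (h s) -> exists s', R s' s /\ S s' /\ h s' = z).
Proof.
elim: (sw_wf s) => {}s _ IH Ss.
set Q := [set z | ~ exists s', R s' s /\ S s' /\ h s' = z].
have Qs : Q s.
  move=> [s' [Rs' [Ss' e]]].
  have [[e1|e1] _] := IH s' Rs' Ss'.
    by rewrite e1 in e; rewrite e in Rs'; apply: (sw_irr Rs').
  by rewrite e in e1; apply: (sw_irr (sw_trans e1 Rs')).
have [Qh hmin] := lstP Q s (ex_intro _ s Qs).
have hs : h s = lst Q s by rewrite hE.
rewrite hs; split; [|split].
- case: (sw_tri (lst Q s) s) => [|[|]]; [by right|by left|].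
  by move=> H; exfalso; exact: hmin _ Qs H.
- by move=> s' Ss' Rs' e; apply: Qh; exists s'; rewrite e.
- move=> z Rz; apply: contrapT => nz; apply: (hmin z) => //.
Qed.

Lemma T7 : [set: X] #<= S \/ exists y, S #= [set z | R z y].
Proof.
have hi : {in S &, injective h}.
  move=> x y; rewrite !in_setE => Sx Sy e.
  case: (sw_tri x y) => [Rxy|[//|Ryx]].
    by have [_ [H _]] := hP y Sy; case: (H x Sx Rxy).
  by have [_ [H _]] := hP x Sx; case: (H y Sy Ryx); rewrite e.
have hSS : h @` S #= S := inj_card_eq hi.
have down : forall s z, S s -> R z (h s) -> (h @` S) z.
  move=> s z Ss Rz; have [_ [_ H]] := hP s Ss.
  by have [s' [_ [Ss' <-]]] := H z Rz; exists s'.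
case: (pselect (exists y, ~ (h @` S) y)) => [ex|nex].
  right; have [y0 [ny0 y0min]] := sw_least _ ex.
  exists y0; apply: (card_eq_trans (card_esym hSS)).
  suff -> : h @` S = [set z | R z y0] by apply: card_eqxx.
  apply/seteqP; split => z.
    move=> Dz; case: (sw_tri z y0) => [//|[e|Ry0z]].
      by rewrite e in Dz.
    by case: Dz => s Ss e; exfalso; apply: ny0; apply: (down s) => //; rewrite e.
  move=> /= Rz; apply: contrapT => nz; exact: (y0min z nz Rz).
left; apply: (card_le_trans (B := h @` S)).
  apply: subset_card_le => z _; apply: contrapT => nz; apply: nex; by exists z.
by have /card_eqPle[] := hSS.
Qed.

End Rec.

Lemma T4 : exists S0, cofinal_in R S0 /\
  forall S', cofinal_in R S' -> S0 #<= S'.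
Proof.
case: (pselect (exists y S, cofinal_in R S /\ S #<= [set z | R z y])) => [ex|nex].
  have [y0 [[S0 [cS0 S0y0]] y0min]] := sw_least _ ex.
  exists S0; split => // S' cS'.
  case: (T7 S') => [H|[y' e]].
    exact: card_le_trans (card_leT _) H.
  have /card_eqPle[e1 e2] := e.
  have ny : ~ R y' y0 by apply: y0min; exists S'.
  apply: (card_le_trans S0y0); apply: (card_le_trans _ e2).
  apply: subset_card_le => z /= Rz.
  case: (sw_tri y0 y') => [H|[<-//|H]]; first exact: sw_trans Rz H.
  by case: ny.
exists [set: X]; split.
  by move=> x; exists x; split => //; left.
move=> S' cS'; case: (T7 S') => // -[y e]; exfalso; apply: nex; exists y, S'; split => //.
by have /card_eqPle[] := e.
Qed.

End SW.
Arguments sw_least {X R} HR P. Arguments sw_tri {X R} HR x y. Arguments sw_wf {X R} HR.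
Arguments sw_trans {X R} HR {x y z}. Arguments T4 {X R} HR. Arguments sw_irr {X R} HR {x}.

Lemma exists_sw (X : Type) : exists R : X -> X -> Prop, strict_wellorder R.
Proof.
have [W Wwo] := well_ordering_principle {classic X}.
have mn : forall P : X -> Prop, (exists x, P x) ->
    exists z, P z /\ forall w, P w -> W z w.
  move=> P [x Px].
  have ne : nonempty (fun w : {classic X} => `[< P w >]).
    by exists x; rewrite inE.
  have [z [[Pz lbz] _]] := Wwo _ ne.
  exists z; split; first by move: Pz; rewrite inE.
  move=> w Pw; apply: lbz; by rewrite inE.
have refl : forall x, W x x.
  by move=> x; have [z [-> H]] := mn (fun w => w = x) (ex_intro _ x erefl); apply: H.
have anti : forall x y, W x y -> W y x -> x = y.
  move=> x y Wxy Wyx.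
  have ne : nonempty (fun w : {classic X} => `[< w = x \/ w = y >]).
    by exists x; rewrite inE; left.
  have [z [_ uz]] := Wwo _ ne.
  have mx : minimum_of W (fun w : {classic X} => `[< w = x \/ w = y >]) x.
    split; first by rewrite inE; left.
    by move=> w; rewrite inE => -[->|->].
  have my : minimum_of W (fun w : {classic X} => `[< w = x \/ w = y >]) y.
    split; first by rewrite inE; right.
    by move=> w; rewrite inE => -[->|->].
  by rewrite -(uz _ mx) -(uz _ my).
have tot : forall x y, W x y \/ W y x.
  move=> x y; have [z [[->|->] H]] := mn (fun w => w = x \/ w = y) (ex_intro _ x (or_introl erefl)).
    by left; apply: H; right.
  by right; apply: H; left.
have tr : forall x y z, W x y -> W y z -> W x z.
  move=> x y z Wxy Wyz.
  have [m [[->|[->|->]] H]] := mn (fun w => w = x \/ w = y \/ w = z)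
      (ex_intro _ x (or_introl erefl)).
  - by apply: H; right; right.
  - by have e := anti _ _ Wxy (H x (or_introl erefl)); rewrite e.
  - by have e := anti _ _ Wyz (H y (or_intror (or_introl erefl))); rewrite -e.
exists (fun x y => W x y /\ x <> y); split; [|split].
- move=> x; apply: contrapT => nA.
  have [m [nAm H]] := mn (fun w => ~ Acc (fun x y => W x y /\ x <> y) w) (ex_intro _ x nA).
  apply: nAm; constructor => y [Wym nym]; apply: contrapT => nAy.
  by apply: nym; apply: anti => //; apply: H.
- move=> x y z [Wxy nxy] [Wyz nyz]; split; first exact: tr Wxy Wyz.
  by move=> e; rewrite e in Wxy; apply: nyz; apply: anti.
- move=> x y; case: (pselect (x = y)) => [e|ne]; first by right; left.
  case: (tot x y) => H; first by left.
  by right; right; split => // e; apply: ne.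
Qed.

Lemma exists_iw (X : Type) : exists R : X -> X -> Prop, initial_wellorder R.
Proof.
have [W HW] := exists_sw X.
case: (pselect (exists y, [set: X] #<= [set z | W z y])) => [ex|nex]; last first.
  by exists W; split => // x H; apply: nex; exists x.
have [y0 [Xy0 y0min]] := sw_least HW _ ex.
have [f [fS fi]] := @card_le_fun _ _ y0 _ _ Xy0.
have finj : forall a b, f a = f b -> a = b by move=> a b; apply: fi; rewrite in_setE.
exists (fun a b => W (f a) (f b)); split; [split; [|split]|].
- exact: wf_inverse_image (sw_wf HW).
- by move=> x y z; apply: (sw_trans HW).
- move=> x y; case: (sw_tri HW (f x) (f y)) => [|[e|]]; [by left| |by right; right].
  by right; left; apply: finj.
- move=> a H; apply: (y0min (f a)); last exact: fS.
  apply: (card_le_trans H); apply: (@fun_card_le _ _ _ _ f) => //.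
  by move=> x y _ _; apply: finj.
Qed.

Theorem lemma4p1 (A B : Type) (E : A -> B -> Prop)
  (* lambda = |A| infinite, lambda < kappa = |B| *)
  (hAinf : infinite_set [set: A])
  (hAB : [set: A] #<= [set: B]) (hBA : ~ ([set: B] #<= [set: A]))
  (* (lambda,kappa)-graph: every b in B has infinitely many neighbours in A *)
  (hgraph : forall b : B, inf_nbrs E [set: A] b)
  (* cf(lambda) > omega *)
  (hcfA : forall S : set A, cof_witness S -> ~ countable S)
  (* cf(kappa) <> cf(lambda) *)
  (hcf : forall (S : set A) (T : set B), cof_witness S -> cof_witness T ->
           ~ (S #= T)) :
  exists (C : set A) (D : set B),
    ~ ([set: A] #<= C) /\ D #= [set: B] /\
    forall b, D b -> inf_nbrs E C b.
Proof.
have [RA iRA] := exists_iw A.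
have HRA : strict_wellorder RA by case: iRA.
have [SA [cSA minSA]] := T4 HRA.
have cwA : cof_witness SA by exists RA.
have bnd : forall N : set A, countable N -> exists y, forall a, N a -> RA a y.
  move=> N cN; apply: contrapT => nb.
  have cN' : cofinal_in RA N.
    move=> y; apply: contrapT => ny; apply: nb; exists y => a Na.
    case: (sw_tri HRA a y) => [//|[e|H]]; exfalso; apply: ny; exists a; split => //.
      by left; rewrite e.
    by right.
  exact: (hcfA SA cwA (card_le_trans (minSA _ cN') cN)).
have [a0 _] := infinite_setN0 hAinf.
have xb : forall b, exists y, infinite_set [set a | RA a y /\ E a b].
  move=> b; have := hgraph b; rewrite /inf_nbrs => /infiniteP Nb.
  have [f [fS fi]] := @card_le_fun _ _ a0 _ _ Nb.
  have [y hy] := bnd (f @` setT) (card_image_le f setT).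
  exists y; apply/infiniteP; apply: (@fun_card_le _ _ _ _ f) => //.
  move=> n _; split; first by apply: hy; exists n.
  by have [] := fS n I.
have [x hx] := choice xb.
pose D (y : A) := [set b | x b = y \/ RA (x b) y].
case: (pselect (exists y, [set: B] #<= D y)) => [[y By]|nex].
  exists [set a | RA a y], (D y); split; [|split].
  - by case: iRA => _; apply.
  - by apply/card_eqPle; split; [exact: card_leT | exact: By].
  - move=> b Db; rewrite /inf_nbrs; apply: (sub_infinite_set _ (hx b)).
    move=> a [Ra Eab]; split => //=.
    by case: Db => [<-//|H]; exact: (sw_trans HRA) Ra H.
exfalso.
have nD : forall y, ~ ([set: B] #<= D y) by move=> y H; apply: nex; exists y.
have up : forall y, exists b, RA y (x b).
  move=> y; apply: contrapT => nb; apply: (nD y); apply: subset_card_le => b _.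
  case: (sw_tri HRA (x b) y) => [H|[e|H]]; [by right|by left|].
  by exfalso; apply: nb; exists b.
have [W HW] := exists_sw B.
pose RB b b' := RA (x b) (x b') \/ (x b = x b' /\ W b b').
have HRB : strict_wellorder RB.
  split; [|split].
  - suff H : forall a b, x b = a -> Acc RB b by move=> b; exact: H.
    move=> a; elim: (sw_wf HRA a) => {}a _ IHa.
    move=> b; elim: (sw_wf HW b) => {}b _ IHb eb.
    constructor => b' [H|[e Wb]].
      by apply: (IHa (x b')) => //; rewrite -eb.
    by apply: IHb => //; rewrite e.
  - move=> b1 b2 b3 [H1|[e1 W1]] [H2|[e2 W2]].
    + by left; exact: (sw_trans HRA) H1 H2.
    + by left; rewrite -e2.
    + by left; rewrite e1.
    + by right; split; [rewrite e1|exact: (sw_trans HW) W1 W2].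
  - move=> b b'; case: (sw_tri HRA (x b) (x b')) => [H|[e|H]].
    + by left; left.
    + case: (sw_tri HW b b') => [H|[e'|H]].
      * by left; right.
      * by right; left.
      * by right; right; right.
    + by right; right; left.
have iRB : initial_wellorder RB.
  split => // b H; apply: (nD (x b)); apply: (card_le_trans H).
  by apply: subset_card_le => z [H'|[e _]]; [right|left].
have [TB [cTB minTB]] := T4 HRB.
have cwB : cof_witness TB by exists RB.
apply: (hcf SA TB cwA cwB); apply/card_eqPle; split.
  apply: (card_le_trans (minSA (x @` TB) _) (card_image_le x TB)).
  move=> a; have [b Rab] := up a; have [t [Tt bt]] := cTB b.
  exists (x t); split; first by exists t.
  right; case: bt => [<-//|[H|[e _]]]; first exact: (sw_trans HRA) Rab H.
  by rewrite -e.
have [g hg] := choice up.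
apply: (card_le_trans (minTB (g @` SA) _) (card_image_le g SA)).
move=> b; have [s [Ss bs]] := cSA (x b).
exists (g s); split; first by exists s.
right; left; case: bs => [->|H]; [exact: hg | exact: (sw_trans HRA) H (hg s)].
Qed.
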